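(* Let $n\ge2$, $N\ge0$ an integer, $0\le\alpha_0<\alpha_1<\dots<\alpha_N$ real numbers, $\bar A_0,\dots,\bar A_N$ real $n\times n$ matrices, and for each $k$ let $F_k$ be either $F_{\bar A_k,\alpha_k}$ or (only when $\bar A_k$ is symmetric positive definite) $\widetilde F_{\bar A_k,\alpha_k}$. Let $A_1,\dots,A_n$ be nonzero $n\times n$ matrices and $G_B$ as in the context. Let $F:\mathbb R^n\to\mathbb R^n$ be one of: (1) $F=G_B$; (2) $F=\sum_{k=0}^NF_k$; (3) $F=\sum_{k=0}^NF_k+G_B$. Assume: (a) in case (1), $G_B$ is $3$-monotone; (b) in case (2), $F_k$ is monotone for $0\le k\le N-1$, $\alpha_N>0$, and $F_N$ is $(\alpha_N+2)$-monotone; (c) in case (3), all $F_k$ and $G_B$ are monotone, and moreover: if $\alpha_N<1$ then $G_B$ is $3$-monotone; if $\alpha_N>1$ then $F_N$ is $(\alpha_N+2)$-monotone; if $\alpha_N=1$ then $F_N$ or $G_B$ is $3$-monotone. Let $\beta=1$ in case (1), $\beta=\alpha_N$ in case (2), $\beta=\max\{\alpha_N,1\}$ in case (3). Then there are $c_1,c_2>0$ such that for all $u,v\in\mathbb R^n$, $$|F(u)-F(v)|\le c_1(1+|u|^\beta+|v|^\beta)|u-v|,\qquad (F(u)-F(v))\cdot(u-v)\ge c_2|u-v|^{\beta+2}.$$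
   Context: $|\cdot|$ is the Euclidean norm. $F_{A,\alpha}(u)=|u|^\alpha Au$ for $\alpha>0$ and $F_{A,0}(u)=Au$; for symmetric positive definite $A$, $\widetilde F_{A,\alpha}(u)=|A^{1/2}u|^\alpha Au$ for $\alpha>0$ and $\widetilde F_{A,0}(u)=Au$. $B(u,v,w)=\mathrm{diag}[u^TA_1v,\dots,u^TA_nv]\,w$; $G_B(0)=0$ and $G_B(u)=B(u,u,u)/|u|$ for $u\ne0$. A map $F$ is monotone if $(F(u)-F(v))\cdot(u-v)\ge0$ for all $u,v$; for $\gamma>0$ it is $\gamma$-monotone if there is $C>0$ with $(F(u)-F(v))\cdot(u-v)\ge C|u-v|^\gamma$ for all $u,v$. *)

(* Defs.v *)
From HB Require Import structures.
From mathcomp Require Import all_boot all_order all_algebra.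
From mathcomp Require Import all_classical all_reals.
From mathcomp Require Import exp.
From Stdlib Require Import ClassicalEpsilon.

Set Implicit Arguments.
Unset Strict Implicit.
Unset Printing Implicit Defensive.

Import Order.TTheory GRing.Theory Num.Theory.
Local Open Scope ring_scope.

Section Defs.
Variable R : realType.
Variable n : nat.

Definition dotv (u v : 'cV[R]_n) : R := \sum_(i < n) u i 0 * v i 0.

Definition enorm (u : 'cV[R]_n) : R := Num.sqrt (dotv u u).

Definition symmetricmx (A : 'M[R]_n) : Prop := A^T = A.

Definition posdef (A : 'M[R]_n) : Prop :=
  symmetricmx A /\ forall u : 'cV[R]_n, u != 0 -> 0 < dotv u (A *m u).

Definition is_sqrtmx (A S : 'M[R]_n) : Prop := posdef S /\ S *m S = A.

Definition sqrtmx (A : 'M[R]_n) : 'M[R]_n :=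
  match excluded_middle_informative (exists S, is_sqrtmx A S) with
  | left H => proj1_sig (constructive_indefinite_description _ H)
  | right _ => 0
  end.

Definition FA (A : 'M[R]_n) (alpha : R) (u : 'cV[R]_n) : 'cV[R]_n :=
  if alpha == 0 then A *m u else (enorm u `^ alpha) *: (A *m u).

Definition FAt (A : 'M[R]_n) (alpha : R) (u : 'cV[R]_n) : 'cV[R]_n :=
  if alpha == 0 then A *m u
  else (enorm (sqrtmx A *m u) `^ alpha) *: (A *m u).

Definition Bform (As : 'I_n -> 'M[R]_n) (u v w : 'cV[R]_n) : 'cV[R]_n :=
  \col_(i < n) (dotv u (As i *m v) * w i 0).

Definition GB (As : 'I_n -> 'M[R]_n) (u : 'cV[R]_n) : 'cV[R]_n :=
  if u == 0 then 0 else (enorm u)^-1 *: Bform As u u u.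

Definition monotone (F : 'cV[R]_n -> 'cV[R]_n) : Prop :=
  forall u v, 0 <= dotv (F u - F v) (u - v).

Definition gmonotone (gamma : R) (F : 'cV[R]_n -> 'cV[R]_n) : Prop :=
  exists C : R, 0 < C /\
    forall u v, C * enorm (u - v) `^ gamma <= dotv (F u - F v) (u - v).

End Defs.

Inductive fcase := Case1 | Case2 | Case3.

(* Main.v *)
Require Import Defs.
From HB Require Import structures.
From mathcomp Require Import all_boot all_order all_algebra.
From mathcomp Require Import all_classical all_reals.
From mathcomp Require Import exp sequences.
From mathcomp Require Import ring lra.
From Stdlib Require Import ClassicalEpsilon.
Import Order.TTheory GRing.Theory Num.Theory.
Local Open Scope ring_scope.
Set Implicit Arguments.
Unset Strict Implicit.
Unset Printing Implicit Defensive.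

Section Euclid.
Variable R : realType.
Variable n : nat.
Implicit Types u v w : 'cV[R]_n.

Lemma dotvC u v : dotv u v = dotv v u.
Proof. by apply: eq_bigr => i _; rewrite mulrC. Qed.

Lemma dotvDl u v w : dotv (u + v) w = dotv u w + dotv v w.
Proof. by rewrite /dotv -big_split; apply: eq_bigr => i _; rewrite mxE mulrDl. Qed.

Lemma dotvZl (a : R) u w : dotv (a *: u) w = a * dotv u w.
Proof. by rewrite /dotv mulr_sumr; apply: eq_bigr => i _; rewrite mxE mulrA. Qed.

Lemma dotvNl u w : dotv (- u) w = - dotv u w.
Proof. by rewrite -scaleN1r dotvZl mulN1r. Qed.

Lemma dotvBl u v w : dotv (u - v) w = dotv u w - dotv v w.
Proof. by rewrite dotvDl dotvNl. Qed.

Lemma dotv0l w : dotv 0 w = 0.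
Proof. by rewrite /dotv big1 // => i _; rewrite mxE mul0r. Qed.

Lemma dotvDr u v w : dotv w (u + v) = dotv w u + dotv w v.
Proof. by rewrite dotvC dotvDl !(dotvC w). Qed.
Lemma dotvZr (a : R) u w : dotv w (a *: u) = a * dotv w u.
Proof. by rewrite dotvC dotvZl dotvC. Qed.
Lemma dotvBr u v w : dotv w (u - v) = dotv w u - dotv w v.
Proof. by rewrite dotvC dotvBl !(dotvC w). Qed.

Lemma dotv_suml (I : finType) (f : I -> 'cV[R]_n) w :
  dotv (\sum_k f k) w = \sum_k dotv (f k) w.
Proof. exact: (big_morph (fun x => dotv x w) (fun x y => dotvDl x y w) (dotv0l w)). Qed.

Lemma dotvv_ge0 u : 0 <= dotv u u.
Proof. by apply: sumr_ge0 => i _; rewrite -expr2 sqr_ge0. Qed.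

Lemma enorm_ge0 u : 0 <= enorm u.
Proof. exact: sqrtr_ge0. Qed.

Lemma enorm_sq u : enorm u ^+ 2 = dotv u u.
Proof. by rewrite sqr_sqrtr // dotvv_ge0. Qed.

Lemma dotv_eq0 u : dotv u u = 0 -> forall w, dotv u w = 0.
Proof.
move=> h w; have h0 := psumr_eq0P (fun i _ => (ltac:(by rewrite -expr2 sqr_ge0) : 0 <= u i 0 * u i 0)) h.
rewrite /dotv big1 // => i _.
by have /eqP := h0 i isT; rewrite mulf_eq0 orbb => /eqP ->; rewrite mul0r.
Qed.

Lemma CS u v : dotv u v <= enorm u * enorm v.
Proof.
have [hu|hu] := eqVneq (dotv u u) 0.
  by rewrite dotv_eq0 // mulr_ge0 // enorm_ge0.
have [hv|hv] := eqVneq (dotv v v) 0.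
  by rewrite dotvC dotv_eq0 // mulr_ge0 // enorm_ge0.
set x := enorm u; set y := enorm v.
have xp : 0 < x by rewrite lt_def enorm_ge0 andbT; apply: contra hu => /eqP h; rewrite -enorm_sq -/x h expr0n.
have yp : 0 < y by rewrite lt_def enorm_ge0 andbT; apply: contra hv => /eqP h; rewrite -enorm_sq -/y h expr0n.
have := dotvv_ge0 (y *: u - x *: v).
rewrite !dotvBl !dotvBr !dotvZl !dotvZr -!enorm_sq -/x -/y (dotvC v u) => H.
have : 2 * (x * y) * dotv u v <= 2 * (x * y) * (x * y) by nra.
by rewrite ler_pM2l // mulr_gt0 // mulr_gt0.
Qed.

Lemma CSabs u v : `|dotv u v| <= enorm u * enorm v.
Proof.
rewrite ler_norml CS andbT lerNl -dotvNl.
have -> : enorm u = enorm (- u) by rewrite /enorm dotvNl dotvC dotvNl opprK.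
exact: CS.
Qed.

Lemma enormN u : enorm (- u) = enorm u.
Proof. by rewrite /enorm dotvNl dotvC dotvNl opprK. Qed.

Lemma enormB u v : enorm (u - v) = enorm (v - u).
Proof. by rewrite -enormN opprB. Qed.

Lemma enormZ (a : R) u : enorm (a *: u) = `|a| * enorm u.
Proof.
by rewrite /enorm dotvZl dotvZr mulrA -expr2 sqrtrM ?sqr_ge0 // sqrtr_sqr.
Qed.

Lemma enormD u v : enorm (u + v) <= enorm u + enorm v.
Proof.
rewrite -(ger0_norm (addr_ge0 (enorm_ge0 u) (enorm_ge0 v))) -sqrtr_sqr.
rewrite /enorm ler_sqrt ?sqr_ge0 // -!/(enorm _).
rewrite dotvDl !dotvDr (dotvC v u) -!enorm_sq.
have := CS u v; nra.
Qed.

Lemma enormBr u v : enorm u - enorm v <= enorm (u - v).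
Proof.
have := enormD (u - v) v; rewrite subrK; lra.
Qed.

Lemma enorm0 : enorm (0 : 'cV[R]_n) = 0.
Proof. by rewrite /enorm dotv0l sqrtr0. Qed.

Lemma coord_le u i : `|u i 0| <= enorm u.
Proof.
rewrite -sqrtr_sqr /enorm ler_sqrt ?dotvv_ge0 // /dotv (bigD1 i) //= expr2.
by rewrite lerDl sumr_ge0 // => j _; rewrite -expr2 sqr_ge0.
Qed.

Lemma enorm_le_sum u : enorm u <= \sum_i `|u i 0|.
Proof.
have s0 : 0 <= \sum_i `|u i 0| by apply: sumr_ge0 => i _.
rewrite -(ger0_norm s0) -sqrtr_sqr /enorm ler_sqrt ?sqr_ge0 //.
rewrite expr2 mulr_suml; apply: ler_sum => i _.
apply: (le_trans (ler_norm _)); rewrite normrM ler_wpM2l //.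
by rewrite (bigD1 i) //= lerDl sumr_ge0.
Qed.

Definition mxn (A : 'M[R]_n) : R := \sum_i \sum_j `|A i j|.

Lemma mxn_ge0 A : 0 <= mxn A.
Proof. by apply: sumr_ge0 => i _; apply: sumr_ge0. Qed.

Lemma enorm_mul A u : enorm (A *m u) <= mxn A * enorm u.
Proof.
apply: (le_trans (enorm_le_sum _)); rewrite /mxn mulr_suml; apply: ler_sum => i _.
rewrite mxE mulr_suml; apply: (le_trans (ler_norm_sum _ _ _)); apply: ler_sum => j _.
by rewrite normrM ler_wpM2l // coord_le.
Qed.

End Euclid.

Section RealLemmas.
Variable R : realType.

Lemma key_ineq (a b al : R) : 0 <= b -> b <= a -> 0 <= al ->
  b * (a `^ al - b `^ al) <= al * a `^ al * (a - b).
Proof.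
move=> b0 ba al0.
have [->|bp] := eqVneq b 0.
  by rewrite mul0r subr0; apply: mulr_ge0; [apply: mulr_ge0 => //; apply: powR_ge0 | exact: le_trans b0 ba].
have bpos : 0 < b by rewrite lt_def bp b0.
have apos : 0 < a by apply: lt_le_trans ba.
rewrite /powR (gt_eqF apos) (gt_eqF bpos).
set E := expR (al * ln a).
have hb : expR (al * ln b) = E * expR (al * (ln b - ln a)).
  by rewrite /E -expRD; congr expR; ring.
have h1 := expR_ge1Dx (al * (ln b - ln a)).
have hl : ln a - ln b <= (a - b) / b.
  have h := @le_ln1Dx R (a / b - 1).
  have e : 1 + (a / b - 1) = a / b by ring.
  rewrite e ln_div ?posrE // in h.
  have -> : (a - b) / b = a / b - 1 by rewrite mulrBl divff.
  apply: h; have : 0 < a / b by rewrite divr_gt0. lra.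
have hl2 : b * (ln a - ln b) <= a - b.
  by rewrite mulrC -ler_pdivlMr.
have E0 : 0 < E by apply: expR_gt0.
rewrite hb.
have : b * (E - E * expR (al * (ln b - ln a))) <= b * (E * (al * (ln a - ln b))).
  apply: ler_wpM2l => //; rewrite -{1}(mulr1 E) -mulrBr ler_pM2l //; lra.
move=> h; apply: (le_trans h).
have : E * al * (b * (ln a - ln b)) <= E * al * (a - b) by rewrite ler_wpM2l // mulr_ge0 // ltW.
lra.
Qed.

Lemma pow_le1 (x al be : R) : 0 <= x -> 0 <= al -> al <= be ->
  x `^ al <= 1 + x `^ be.
Proof.
move=> x0 al0 ab.
have [x1|x1] := leP x 1.
  have [->|xn] := eqVneq x 0.
    rewrite /powR eqxx; apply: (le_trans (_ : _ <= 1)); last by rewrite lerDl; case: (_ == _).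
    by case: (_ == _).
  have xp : 0 < x by rewrite lt_def xn x0.
  apply: (le_trans (_ : _ <= 1)); last by rewrite lerDl powR_ge0.
  by rewrite -(powRr0 x) ger_powR // xp x1.
apply: (le_trans (_ : _ <= x `^ be)); last by rewrite lerDr.
by rewrite ler_powR // ltW.
Qed.

End RealLemmas.

Section LipH.
Variable R : realType.
Variable n : nat.

Lemma lipH (S A : 'M[R]_n) (al kSA : R) : 0 <= al -> 0 <= kSA ->
  (forall v, enorm (A *m v) <= kSA * enorm (S *m v)) ->
  forall u v, enorm (enorm (S *m u) `^ al *: (A *m u) - enorm (S *m v) `^ al *: (A *m v))
   <= ((mxn S) `^ al * mxn A + al * kSA * (mxn S) `^ al * mxn S)
      * (enorm u `^ al + enorm v `^ al) * enorm (u - v).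
Proof.
move=> al0 k0 hSA u v.
wlog h : u v / enorm (S *m v) <= enorm (S *m u).
  move=> W; have [h|h] := leP (enorm (S *m v)) (enorm (S *m u)); first exact: W.
  rewrite enormB (enormB u) (addrC (enorm u `^ al)); apply: W; exact: ltW.
set a := enorm (S *m u); set b := enorm (S *m v); set D := enorm (u - v).
set P := a `^ al; set Q := b `^ al; set U := enorm u `^ al; set V := enorm v `^ al.
set M := mxn S `^ al.
have e : P *: (A *m u) - Q *: (A *m v) = P *: (A *m (u - v)) + (P - Q) *: (A *m v).
  by rewrite mulmxBr scalerBr scalerBl addrA subrK.
have b0 : 0 <= b by apply: enorm_ge0.
have PQ : Q <= P by apply: ge0_ler_powR => //; rewrite nnegrE enorm_ge0.
have Q0 : 0 <= Q by apply: powR_ge0.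
have PQ0 : 0 <= P - Q by rewrite subr_ge0.
have U0 : 0 <= U by apply: powR_ge0.
have V0 : 0 <= V by apply: powR_ge0.
have M0 : 0 <= M by apply: powR_ge0.
have D0 : 0 <= D by apply: enorm_ge0.
have mA0 := mxn_ge0 A; have mS0 := mxn_ge0 S.
have hX : enorm (A *m (u - v)) <= mxn A * D by apply: enorm_mul.
have hY : enorm (A *m v) <= kSA * b by apply: hSA.
have hk : b * (P - Q) <= al * P * (a - b) by apply: key_ineq.
have hab : a - b <= mxn S * D.
  apply: (le_trans (enormBr _ _)); rewrite -mulmxBr; exact: enorm_mul.
have hP : P <= M * U.
  rewrite /M /U -powRM ?mxn_ge0 ?enorm_ge0 //; apply: ge0_ler_powR => //.
    by rewrite nnegrE enorm_ge0.
    by rewrite nnegrE mulr_ge0 ?mxn_ge0 ?enorm_ge0.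
  exact: enorm_mul.
rewrite e; apply: (le_trans (enormD _ _)); rewrite !enormZ.
rewrite (ger0_norm (powR_ge0 _ _)) (ger0_norm PQ0).
have h1 : P * enorm (A *m (u - v)) <= M * U * (mxn A * D).
  apply: (le_trans (ler_wpM2l (powR_ge0 _ _) hX)); apply: ler_wpM2r => //.
  by rewrite mulr_ge0.
have h2 : (P - Q) * enorm (A *m v) <= kSA * (al * P * (a - b)).
  apply: (le_trans (ler_wpM2l PQ0 hY)).
  by rewrite mulrCA ler_wpM2l // mulrC.
have h3 : al * P * (a - b) <= al * (M * U) * (mxn S * D).
  apply: ler_pM => //; first by rewrite mulr_ge0 // powR_ge0.
    by rewrite subr_ge0.
  by apply: ler_wpM2l.
have h4 : 0 <= (M * mxn A + al * kSA * M * mxn S) * V * D.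
  by rewrite !(mulr_ge0, addr_ge0).
have h5 := ler_wpM2l k0 h3.
rewrite mulrDr mulrDl.
apply: (le_trans (lerD h1 (le_trans h2 h5))).
have -> : M * U * (mxn A * D) + kSA * (al * (M * U) * (mxn S * D)) =
  (M * mxn A + al * kSA * M * mxn S) * U * D by ring.
by rewrite mulrDl lerDl.
Qed.

End LipH.

Section LipF.
Variable R : realType.
Variable n : nat.

Definition lipP (al : R) (f : 'cV[R]_n -> 'cV[R]_n) :=
  exists K, 0 <= K /\ forall u v,
    enorm (f u - f v) <= K * (enorm u `^ al + enorm v `^ al) * enorm (u - v).

Lemma lipP_gen (S A : 'M[R]_n) al kSA f : 0 <= al -> 0 <= kSA ->
  (forall v, enorm (A *m v) <= kSA * enorm (S *m v)) ->
  (forall u, f u = enorm (S *m u) `^ al *: (A *m u)) -> lipP al f.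
Proof.
move=> al0 k0 hSA hf.
exists ((mxn S) `^ al * mxn A + al * kSA * (mxn S) `^ al * mxn S); split.
  by rewrite !(mulr_ge0, addr_ge0) ?powR_ge0 ?mxn_ge0.
by move=> u v; rewrite !hf; apply: lipH.
Qed.

Lemma lipFA (A : 'M[R]_n) al : 0 <= al -> lipP al (FA A al).
Proof.
move=> al0; apply: (lipP_gen (S := 1%:M) (A := A) (kSA := mxn A)) => //.
- exact: mxn_ge0.
- by move=> v; rewrite mul1mx; apply: enorm_mul.
- move=> u; rewrite /FA mul1mx; case: eqP => [->|//].
  by rewrite powRr0 scale1r.
Qed.

Lemma lipFAt (A : 'M[R]_n) al : 0 <= al -> lipP al (FAt A al).
Proof.
move=> al0; rewrite /FAt /sqrtmx.
case: excluded_middle_informative => [H|H].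
  set S := proj1_sig _.
  have hS : S *m S = A by rewrite /S; case: (proj2_sig (constructive_indefinite_description _ H)).
  apply: (lipP_gen (S := S) (A := A) (kSA := mxn S)) => //.
  - exact: mxn_ge0.
  - by move=> v; rewrite -hS -mulmxA; apply: enorm_mul.
  - move=> u; case: eqP => [->|//].
    by rewrite powRr0 scale1r.
have [->|al1] := eqVneq al 0.
  exists (mxn A); split; first exact: mxn_ge0.
  move=> u v /=; rewrite !powRr0 -mulmxBr.
  apply: (le_trans (enorm_mul _ _)); rewrite -mulrA ler_wpM2l ?mxn_ge0 //.
  by rewrite ler_peMl ?enorm_ge0 // lerDr.
exists 0; split => // u v /=; rewrite !mul0mx enorm0 powR0 // !scale0r subr0 enorm0.
by rewrite !mul0r.
Qed.

End LipF.

Section GLip.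
Variable R : realType.
Variable n : nat.
Implicit Types u v : 'cV[R]_n.

Definition hq (A : 'M[R]_n) u := (enorm u)^-1 * dotv u (A *m u).

Lemma GB_E (As : 'I_n -> 'M[R]_n) u : GB As u = \col_i (hq (As i) u * u i 0).
Proof.
rewrite /GB; case: eqP => [->|_].
  by apply/matrixP => i j; rewrite !mxE mulr0.
by apply/matrixP => i j; rewrite !mxE /hq mulrA.
Qed.

Lemma hq_bound A u : `|hq A u| <= mxn A * enorm u.
Proof.
rewrite /hq normrM ger0_norm ?invr_ge0 ?enorm_ge0 //.
have h : `|dotv u (A *m u)| <= enorm u * (mxn A * enorm u).
  apply: (le_trans (CSabs _ _)); apply: ler_wpM2l; [exact: enorm_ge0 | exact: enorm_mul].
have [e|e] := eqVneq (enorm u) 0.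
  by rewrite e invr0 mul0r mulr0.
apply: (le_trans (ler_wpM2l (ltW _) h)); first by rewrite invr_gt0 lt_def e enorm_ge0.
by rewrite mulKf.
Qed.

Lemma hq_lip A u v : `|hq A u - hq A v| <= 3 * mxn A * enorm (u - v).
Proof.
wlog h : u v / enorm v <= enorm u.
  move=> W; have [h|h] := leP (enorm v) (enorm u); first exact: W.
  by rewrite distrC enormB; apply: W; apply: ltW.
set x := enorm u; set y := enorm v; set D := enorm (u - v); set m := mxn A.
have m0 : 0 <= m by apply: mxn_ge0.
have D0 : 0 <= D by apply: enorm_ge0.
have y0 : 0 <= y by apply: enorm_ge0.
have xyD : x - y <= D by apply: enormBr.
have [ye|yn] := eqVneq y 0.
  rewrite {2}/hq -/y ye invr0 mul0r subr0.
  apply: (le_trans (hq_bound _ _)); rewrite -/x -/m.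
  have : m * x <= m * D by rewrite ler_wpM2l //; lra.
  have : 0 <= m * D by rewrite mulr_ge0.
  lra.
have yp : 0 < y by rewrite lt_def yn.
have xp : 0 < x by apply: lt_le_trans h.
set a := dotv u (A *m u); set b := dotv v (A *m v).
have hab : `|a - b| <= m * (x + y) * D.
  have -> : a - b = dotv u (A *m (u - v)) + dotv (u - v) (A *m v).
    by rewrite /a /b mulmxBr dotvBr dotvBl addrA subrK.
  apply: (le_trans (ler_normD _ _)).
  have h1 : `|dotv u (A *m (u - v))| <= x * (m * D).
    apply: (le_trans (CSabs _ _)); apply: ler_wpM2l; [exact: enorm_ge0 | exact: enorm_mul].
  have h2 : `|dotv (u - v) (A *m v)| <= D * (m * y).
    apply: (le_trans (CSabs _ _)); apply: ler_wpM2l; [exact: enorm_ge0 | exact: enorm_mul].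
  have := lerD h1 h2; lra.
have hb : `|b| <= y * (m * y).
  apply: (le_trans (CSabs _ _)); apply: ler_wpM2l; [exact: enorm_ge0 | exact: enorm_mul].
have e : hq A u - hq A v = (a - b) / x + b * (y - x) / (x * y).
  rewrite /hq -/x -/y -/a -/b; field.
  by rewrite (gt_eqF xp) (gt_eqF yp).
rewrite e; apply: (le_trans (ler_normD _ _)).
have T1 : `|(a - b) / x| <= 2 * m * D.
  rewrite normrM [`|x^-1|]ger0_norm; last by rewrite invr_ge0 ltW.
  rewrite ler_pdivrMr //.
  apply: (le_trans hab).
  have hxy : 0 <= x - y by rewrite subr_ge0.
  have := mulr_ge0 (mulr_ge0 m0 D0) hxy; lra.
have T2 : `|b * (y - x) / (x * y)| <= m * D.
  rewrite normrM [`|(x * y)^-1|]ger0_norm; last by rewrite invr_ge0 ltW // mulr_gt0.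
  rewrite ler_pdivrMr ?mulr_gt0 //.
  have hxy : 0 <= x - y by rewrite subr_ge0.
  rewrite normrM distrC (ger0_norm hxy).
  have f1 := ler_wpM2r hxy hb.
  have f2 : y * (x - y) <= x * D by apply: ler_pM.
  have f3 := ler_wpM2l (mulr_ge0 m0 y0) f2.
  lra.
have := lerD T1 T2; lra.
Qed.

End GLip.

Section GLip2.
Variable R : realType.
Variable n : nat.

Lemma lipG (As : 'I_n -> 'M[R]_n) : exists K, 0 <= K /\ forall u v,
  enorm (GB As u - GB As v) <= K * (enorm u + enorm v) * enorm (u - v).
Proof.
exists (\sum_i 3 * mxn (As i)); split.
  by apply: sumr_ge0 => i _; rewrite mulr_ge0 ?mxn_ge0.
move=> u v; rewrite !GB_E.
apply: (le_trans (enorm_le_sum _)); rewrite !mulr_suml; apply: ler_sum => i _.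
rewrite !mxE.
set x := enorm u; set y := enorm v; set D := enorm (u - v); set m := mxn (As i).
have m0 : 0 <= m by apply: mxn_ge0.
have D0 : 0 <= D by apply: enorm_ge0.
have x0 : 0 <= x by apply: enorm_ge0.
have y0 : 0 <= y by apply: enorm_ge0.
have -> : hq (As i) u * u i 0 - hq (As i) v * v i 0 =
  hq (As i) u * (u i 0 - v i 0) + (hq (As i) u - hq (As i) v) * v i 0 by ring.
apply: (le_trans (ler_normD _ _)); rewrite (normrM (hq _ u)) (normrM (hq _ u - _)).
have c1 : `|u i 0 - v i 0| <= D.
  by have := coord_le (u - v) i; rewrite !mxE.
have c2 : `|v i 0| <= y by apply: coord_le.
have f1 := ler_pM (normr_ge0 _) (normr_ge0 _) (hq_bound (As i) u) c1.
have f2 := ler_pM (normr_ge0 _) (normr_ge0 _) (hq_lip (As i) u v) c2.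
rewrite -/x -/m -/D in f1 f2.
have g1 : 0 <= m * y * D by rewrite !mulr_ge0.
have g2 : 0 <= m * x * D by rewrite !mulr_ge0.
have -> : 3 * m * (x + y) * D = m * x * D + 3 * m * D * y + 2 * (m * x * D) by ring.
lra.
Qed.

End GLip2.

Section Aux.
Variable R : realType.
Variable n : nat.

Lemma enorm_sum (I : finType) (f : I -> 'cV[R]_n) :
  enorm (\sum_k f k) <= \sum_k enorm (f k).
Proof.
apply: (big_ind2 (fun w r => enorm w <= r)).
- by rewrite enorm0.
- by move=> a b c d h1 h2; apply: (le_trans (enormD _ _)); apply: lerD.
- by move=> i _.
Qed.

Lemma sum_lower (I : finType) (g : I -> R) j :
  (forall k, k != j -> 0 <= g k) -> g j <= \sum_k g k.
Proof.
move=> h; rewrite (bigD1 j) //= lerDl; apply: sumr_ge0 => k; exact: h.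
Qed.

End Aux.
Theorem mainTheorem14 (R : realType) (n N : nat) (hn : (2 <= n)%N)
  (alpha : 'I_N.+1 -> R) (Abar : 'I_N.+1 -> 'M[R]_n)
  (tilde : 'I_N.+1 -> bool) (As : 'I_n -> 'M[R]_n) (c : fcase)
  (halpha0 : 0 <= alpha ord0)
  (halpha_inc : forall i j : 'I_N.+1, (i < j)%N -> alpha i < alpha j)
  (htilde : forall k, tilde k -> posdef (Abar k))
  (hAs : forall i, As i != 0) :
  let Fk k := if tilde k then FAt (Abar k) (alpha k) else FA (Abar k) (alpha k) in
  let G := GB As in
  let F := match c with
           | Case1 => G
           | Case2 => fun u => \sum_(k < N.+1) Fk k u
           | Case3 => fun u => \sum_(k < N.+1) Fk k u + G u
           end in
  let aN := alpha ord_max in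
  let beta := match c with
              | Case1 => 1
              | Case2 => aN
              | Case3 => Num.max aN 1
              end in
  match c with
  | Case1 => gmonotone 3 G
  | Case2 => (forall k : 'I_N.+1, (k < N)%N -> monotone (Fk k)) /\
             0 < aN /\ gmonotone (aN + 2) (Fk ord_max)
  | Case3 => (forall k, monotone (Fk k)) /\ monotone G /\
             (aN < 1 -> gmonotone 3 G) /\
             (1 < aN -> gmonotone (aN + 2) (Fk ord_max)) /\
             (aN = 1 -> gmonotone 3 (Fk ord_max) \/ gmonotone 3 G)
  end ->
  exists c1 c2 : R, 0 < c1 /\ 0 < c2 /\
    forall u v : 'cV[R]_n,
      enorm (F u - F v) <= c1 * (1 + enorm u `^ beta + enorm v `^ beta) * enorm (u - v)
      /\ c2 * enorm (u - v) `^ (beta + 2) <= dotv (F u - F v) (u - v).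
Proof.
move=> Fk G F aN beta Hyp.
have alpha_ge0 : forall k, 0 <= alpha k.
  move=> k; have [k0|k0] := posnP k; last exact: le_trans halpha0 (ltW (halpha_inc ord0 k k0)).
  by have -> : k = ord0 by apply/ord_inj.
have alpha_le : forall k, alpha k <= aN.
  move=> k; have [kN|kN] := ltnP k N; first exact: ltW (halpha_inc k ord_max kN).
  have -> : k = ord_max by apply/ord_inj; apply/eqP; rewrite eqn_leq kN -ltnS ltn_ord.
  exact: lexx.
have lipFk : forall k, lipP (alpha k) (Fk k).
  move=> k; rewrite /Fk; case: (tilde k); [exact: lipFAt | exact: lipFA].
case: (@choice _ _ (fun k K => 0 <= K /\ forall u v,
    enorm (Fk k u - Fk k v) <= K * (enorm u `^ alpha k + enorm v `^ alpha k) * enorm (u - v)) lipFk) => Kf HK.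
have [KG [KG0 HG]] := lipG As.
set SK := \sum_k Kf k.
have SK0 : 0 <= SK by apply: sumr_ge0 => k _; case: (HK k).
have sumU : forall be, (forall k, alpha k <= be) -> forall u v,
    enorm (\sum_k Fk k u - \sum_k Fk k v)
      <= 2 * SK * (1 + enorm u `^ be + enorm v `^ be) * enorm (u - v).
  move=> be hbe u v; rewrite -sumrB; apply: (le_trans (enorm_sum _)).
  rewrite /SK !mulr_sumr !mulr_suml; apply: ler_sum => k _.
  case: (HK k) => K0 Hk; apply: (le_trans (Hk u v)).
  apply: ler_wpM2r; first exact: enorm_ge0.
  rewrite [2 * Kf k]mulrC -mulrA; apply: ler_wpM2l => //.
  have := pow_le1 (enorm_ge0 u) (alpha_ge0 k) (hbe k).
  have := pow_le1 (enorm_ge0 v) (alpha_ge0 k) (hbe k).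
  have := powR_ge0 (enorm u) be; have := powR_ge0 (enorm v) be.
  lra.
have GU : forall be, 1 <= be -> forall u v,
    enorm (G u - G v) <= 2 * KG * (1 + enorm u `^ be + enorm v `^ be) * enorm (u - v).
  move=> be hbe u v; apply: (le_trans (HG u v)).
  apply: ler_wpM2r; first exact: enorm_ge0.
  rewrite [2 * KG]mulrC -mulrA; apply: ler_wpM2l => //.
  have := pow_le1 (enorm_ge0 u) ler01 hbe.
  have := pow_le1 (enorm_ge0 v) ler01 hbe.
  rewrite !powRr1 ?enorm_ge0 //.
  have := powR_ge0 (enorm u) be; have := powR_ge0 (enorm v) be.
  lra.
have c1p : 0 < 2 * SK + 2 * KG + 1.
  by have := mulr_ge0 (ler0n R 2) SK0; have := mulr_ge0 (ler0n R 2) KG0; lra.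
have scal : forall a b P D : R, 0 <= P -> 0 <= D -> a <= b -> a * P * D <= b * P * D.
  by move=> a b P D P0 D0 ab; apply: ler_wpM2r => //; apply: ler_wpM2r.
have P0 : forall be (u v : 'cV[R]_n), 0 <= 1 + enorm u `^ be + enorm v `^ be.
  by move=> be u v; rewrite !addr_ge0 ?powR_ge0.
have lowsum : forall u v, dotv (\sum_k Fk k u - \sum_k Fk k v) (u - v)
    = \sum_k dotv (Fk k u - Fk k v) (u - v).
  by move=> u v; rewrite -sumrB dotv_suml.
have c1S : 2 * SK <= 2 * SK + 2 * KG + 1.
  by have := mulr_ge0 (ler0n R 2) KG0; lra.
have c1G : 2 * KG <= 2 * SK + 2 * KG + 1.
  by have := mulr_ge0 (ler0n R 2) SK0; lra.
rewrite /F /beta; clear F beta; case: c Hyp => /= Hyp.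
- case: Hyp => C [C0 HC].
  exists (2 * SK + 2 * KG + 1), C; split; first exact: c1p. split; first exact: C0.
  move=> u v; split.
    apply: (le_trans (GU 1 (lexx 1) u v)); apply: scal; [exact: P0 | exact: enorm_ge0 | done].
  by have -> : (1 + 2 : R) = 3 by []; apply: HC.
- case: Hyp => Hmon [aN0 [C [C0 HC]]].
  exists (2 * SK + 2 * KG + 1), C; split; first exact: c1p. split; first exact: C0.
  move=> u v; split.
    apply: (le_trans (sumU aN alpha_le u v)); apply: scal; [exact: P0 | exact: enorm_ge0 | done].
  rewrite lowsum; apply: (le_trans (HC u v)); apply: (sum_lower (j := ord_max)) => k hk.
  apply: Hmon; have := ltn_ord k; rewrite ltnS leq_eqVlt => /orP[h|//].
  by case/eqP: hk; apply/ord_inj; apply/eqP.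
- case: Hyp => Hmon [HGm [H1 [H2 H3]]].
  set b := Num.max aN 1.
  have hb1 : 1 <= b by rewrite le_max lexx orbT.
  have hbk : forall k, alpha k <= b by move=> k; rewrite le_max alpha_le.
  have upper : forall u v, enorm (\sum_k Fk k u + G u - (\sum_k Fk k v + G v))
      <= (2 * SK + 2 * KG + 1) * (1 + enorm u `^ b + enorm v `^ b) * enorm (u - v).
    move=> u v; rewrite opprD addrACA; apply: (le_trans (enormD _ _)).
    have := sumU b hbk u v; have := GU b hb1 u v.
    have := mulr_ge0 (P0 b u v) (enorm_ge0 (u - v)).
    set P := 1 + _ + _; set D := enorm (u - v); move=> PD h1 h2.
    have -> : (2 * SK + 2 * KG + 1) * P * D = 2 * SK * P * D + 2 * KG * P * D + P * D by ring.
    lra.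
  have lowE : forall u v, dotv (\sum_k Fk k u + G u - (\sum_k Fk k v + G v)) (u - v)
      = \sum_k dotv (Fk k u - Fk k v) (u - v) + dotv (G u - G v) (u - v).
    by move=> u v; rewrite -lowsum -dotvDl opprD addrACA.
  have sum0 : forall u v, 0 <= \sum_k dotv (Fk k u - Fk k v) (u - v).
    by move=> u v; apply: sumr_ge0 => k _; apply: Hmon.
  have fromG : gmonotone 3 G -> b = 1 -> exists c2, 0 < c2 /\ forall u v,
      c2 * enorm (u - v) `^ (b + 2) <= dotv (\sum_k Fk k u + G u - (\sum_k Fk k v + G v)) (u - v).
    move=> [C [C0 HC]] e; exists C; split => // u v; rewrite lowE e.
    have -> : (1 + 2 : R) = 3 by [].
    have := HC u v; have := sum0 u v; lra.
  have fromF : gmonotone (b + 2) (Fk ord_max) -> exists c2, 0 < c2 /\ forall u v,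
      c2 * enorm (u - v) `^ (b + 2) <= dotv (\sum_k Fk k u + G u - (\sum_k Fk k v + G v)) (u - v).
    move=> [C [C0 HC]]; exists C; split => // u v; rewrite lowE.
    have := HC u v; have := HGm u v.
    have := @sum_lower _ _ (fun k => dotv (Fk k u - Fk k v) (u - v)) ord_max (fun k _ => Hmon k u v).
    lra.
  have [c2 [c2p Hc2]] : exists c2, 0 < c2 /\ forall u v,
      c2 * enorm (u - v) `^ (b + 2) <= dotv (\sum_k Fk k u + G u - (\sum_k Fk k v + G v)) (u - v).
    have [h|h|h] := ltgtP aN 1.
    + by apply: fromG; [exact: H1 | rewrite /b max_r // ltW].
    + by apply: fromF; rewrite /b max_l ?ltW //; exact: H2.
    + have eb : b = 1 by rewrite /b h max_r.
      case: (H3 h) => hh; [apply: fromF; rewrite eb; exact: hh | exact: fromG].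
  exists (2 * SK + 2 * KG + 1), c2; split; first exact: c1p. split; first exact: c2p.
  by move=> u v; split; [exact: upper | exact: Hc2].
Qed.
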